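(* Let $P,Q,\widetilde P,\widetilde Q\in\mathbb{R}^{3\times3}$ be symmetric matrices with entries $p_{ij},q_{ij},\widetilde p_{ij},\widetilde q_{ij}$. Let $\Omega=\{(x_i,y_i)\}_{i=1}^N\subset\mathbb{R}^2$ with $\operatorname{rank}V_\Omega=15$, write $\bar x=(x,y,1)^T$, and suppose that $$\frac{\bar x^TP\bar x}{\bar x^TQ\bar x}=\frac{\bar x^T\widetilde P\bar x}{\bar x^T\widetilde Q\bar x}\quad\text{for all }(x,y)\in\Omega$$ (with the denominators nonzero). Suppose moreover that one of the following holds. Case 1: $q_{11}\ne0$, $q_{22}\ne0$, $q_{33}\ne0$, and $4(p_{11}q_{12}-p_{12}q_{11})(p_{22}q_{12}-p_{12}q_{22})+(p_{11}q_{22}-p_{22}q_{11})^2\ne0$, $4(p_{11}q_{13}-p_{13}q_{11})(p_{33}q_{13}-p_{13}q_{33})+(p_{11}q_{33}-p_{33}q_{11})^2\ne0$, $4(p_{22}q_{23}-p_{23}q_{22})(p_{33}q_{23}-p_{23}q_{33})+(p_{22}q_{33}-p_{33}q_{22})^2\ne0$. Case 2: $p_{j2}=p_{2j}=q_{j2}=q_{2j}=\widetilde p_{j2}=\widetilde p_{2j}=\widetilde q_{j2}=\widetilde q_{2j}=0$ for all $j\in\{1,2,3\}$, $q_{11}\ne0$, $q_{33}\ne0$, and $4(p_{11}q_{13}-p_{13}q_{11})(p_{33}q_{13}-p_{13}q_{33})+(p_{11}q_{33}-p_{33}q_{11})^2\ne0$. Then there is a constant scalar $t\ne0$ with $P=t\widetilde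 P$ and $Q=t\widetilde Q$.
   Context: For a finite set of locations $\Omega=\{(x_i,y_i)\}_{i=1}^N$, $V_\Omega\in\mathbb{R}^{N\times15}$ denotes the matrix whose $i$-th row consists of all 15 monomials $x_i^py_i^q$ with $p,q\ge0$, $p+q\le4$. *)

(* Defs.v *)
From HB Require Import structures.
From mathcomp Require Import all_boot all_order all_algebra.
From mathcomp Require Import reals.
Set Implicit Arguments. Unset Strict Implicit. Unset Printing Implicit Defensive.
Import Order.TTheory GRing.Theory Num.Theory.
Local Open Scope ring_scope.

(* Exponent pairs (p,q), p+q <= 4, in graded order: 15 monomials x^p y^q. *)
Definition mon_exps : seq (nat * nat) :=
  flatten [seq [seq (p, (k - p)%N) | p <- iota 0 k.+1] | k <- iota 0 5].

(* V_Omega : N x 15 matrix, row i = all monomials x_i^p y_i^q, p+q <= 4. *)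
Definition Vmat (R : ringType) (N : nat) (xs ys : 'I_N -> R) : 'M[R]_(N, 15) :=
  \matrix_(i < N, j < 15)
    (xs i ^+ (nth (0, 0)%N mon_exps j).1 * ys i ^+ (nth (0, 0)%N mon_exps j).2).

Definition xbar (R : ringType) (x y : R) : 'rV[R]_3 :=
  \row_(j < 3) [:: x; y; 1]`_j.

Definition qf (R : ringType) (M : 'M[R]_3) (x y : R) : R :=
  (xbar x y *m M *m (xbar x y)^T) ord0 ord0.

(* 1-based entry access: ent M i j = m_{ij} for 1 <= i,j <= 3 *)
Definition ent (R : Type) (M : 'M[R]_3) (i j : nat) : R :=
  M (@inord 2 i.-1) (@inord 2 j.-1).

Definition disc_cond (R : ringType) (P Q : 'M[R]_3) (a b : nat) : R :=
  4 * (ent P a a * ent Q a b - ent P a b * ent Q a a)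
    * (ent P b b * ent Q a b - ent P a b * ent Q b b)
  + (ent P a a * ent Q b b - ent P b b * ent Q a a) ^+ 2.

(* Main.v *)
Require Import Defs.
From HB Require Import structures.
From mathcomp Require Import all_boot all_order all_algebra.
From mathcomp Require Import reals ring.
Import Order.TTheory GRing.Theory Num.Theory.
Set Implicit Arguments. Unset Strict Implicit.
Local Open Scope ring_scope.
Definition cFl (R : ringType) (P Q Pt Qt : 'M[R]_3) : seq R := [::
  ((ent P 3 3 * ent Qt 3 3) - (ent Pt 3 3 * ent Q 3 3));
  (((ent P 2 3 + ent P 3 2) * ent Qt 3 3 + ent P 3 3 * (ent Qt 2 3 + ent Qt 3 2)) - ((ent Pt 2 3 + ent Pt 3 2) * ent Q 3 3 + ent Pt 3 3 * (ent Q 2 3 + ent Q 3 2)));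
  (((ent P 1 3 + ent P 3 1) * ent Qt 3 3 + ent P 3 3 * (ent Qt 1 3 + ent Qt 3 1)) - ((ent Pt 1 3 + ent Pt 3 1) * ent Q 3 3 + ent Pt 3 3 * (ent Q 1 3 + ent Q 3 1)));
  ((ent P 2 2 * ent Qt 3 3 + (ent P 2 3 + ent P 3 2) * (ent Qt 2 3 + ent Qt 3 2) + ent P 3 3 * ent Qt 2 2) - (ent Pt 2 2 * ent Q 3 3 + (ent Pt 2 3 + ent Pt 3 2) * (ent Q 2 3 + ent Q 3 2) + ent Pt 3 3 * ent Q 2 2));
  (((ent P 1 2 + ent P 2 1) * ent Qt 3 3 + (ent P 1 3 + ent P 3 1) * (ent Qt 2 3 + ent Qt 3 2) + (ent P 2 3 + ent P 3 2) * (ent Qt 1 3 + ent Qt 3 1) + ent P 3 3 * (ent Qt 1 2 + ent Qt 2 1)) - ((ent Pt 1 2 + ent Pt 2 1) * ent Q 3 3 + (ent Pt 1 3 + ent Pt 3 1) * (ent Q 2 3 + ent Q 3 2) + (ent Pt 2 3 + ent Pt 3 2) * (ent Q 1 3 + ent Q 3 1) + ent Pt 3 3 * (ent Q 1 2 + ent Q 2 1)));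
  ((ent P 1 1 * ent Qt 3 3 + (ent P 1 3 + ent P 3 1) * (ent Qt 1 3 + ent Qt 3 1) + ent P 3 3 * ent Qt 1 1) - (ent Pt 1 1 * ent Q 3 3 + (ent Pt 1 3 + ent Pt 3 1) * (ent Q 1 3 + ent Q 3 1) + ent Pt 3 3 * ent Q 1 1));
  ((ent P 2 2 * (ent Qt 2 3 + ent Qt 3 2) + (ent P 2 3 + ent P 3 2) * ent Qt 2 2) - (ent Pt 2 2 * (ent Q 2 3 + ent Q 3 2) + (ent Pt 2 3 + ent Pt 3 2) * ent Q 2 2));
  (((ent P 1 2 + ent P 2 1) * (ent Qt 2 3 + ent Qt 3 2) + ent P 2 2 * (ent Qt 1 3 + ent Qt 3 1) + (ent P 1 3 + ent P 3 1) * ent Qt 2 2 + (ent P 2 3 + ent P 3 2) * (ent Qt 1 2 + ent Qt 2 1)) - ((ent Pt 1 2 + ent Pt 2 1) * (ent Q 2 3 + ent Q 3 2) + ent Pt 2 2 * (ent Q 1 3 + ent Q 3 1) + (ent Pt 1 3 + ent Pt 3 1) * ent Q 2 2 + (ent Pt 2 3 + ent Pt 3 2) * (ent Q 1 2 + ent Q 2 1)));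
  ((ent P 1 1 * (ent Qt 2 3 + ent Qt 3 2) + (ent P 1 2 + ent P 2 1) * (ent Qt 1 3 + ent Qt 3 1) + (ent P 1 3 + ent P 3 1) * (ent Qt 1 2 + ent Qt 2 1) + (ent P 2 3 + ent P 3 2) * ent Qt 1 1) - (ent Pt 1 1 * (ent Q 2 3 + ent Q 3 2) + (ent Pt 1 2 + ent Pt 2 1) * (ent Q 1 3 + ent Q 3 1) + (ent Pt 1 3 + ent Pt 3 1) * (ent Q 1 2 + ent Q 2 1) + (ent Pt 2 3 + ent Pt 3 2) * ent Q 1 1));
  ((ent P 1 1 * (ent Qt 1 3 + ent Qt 3 1) + (ent P 1 3 + ent P 3 1) * ent Qt 1 1) - (ent Pt 1 1 * (ent Q 1 3 + ent Q 3 1) + (ent Pt 1 3 + ent Pt 3 1) * ent Q 1 1));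
  ((ent P 2 2 * ent Qt 2 2) - (ent Pt 2 2 * ent Q 2 2));
  (((ent P 1 2 + ent P 2 1) * ent Qt 2 2 + ent P 2 2 * (ent Qt 1 2 + ent Qt 2 1)) - ((ent Pt 1 2 + ent Pt 2 1) * ent Q 2 2 + ent Pt 2 2 * (ent Q 1 2 + ent Q 2 1)));
  ((ent P 1 1 * ent Qt 2 2 + (ent P 1 2 + ent P 2 1) * (ent Qt 1 2 + ent Qt 2 1) + ent P 2 2 * ent Qt 1 1) - (ent Pt 1 1 * ent Q 2 2 + (ent Pt 1 2 + ent Pt 2 1) * (ent Q 1 2 + ent Q 2 1) + ent Pt 2 2 * ent Q 1 1));
  ((ent P 1 1 * (ent Qt 1 2 + ent Qt 2 1) + (ent P 1 2 + ent P 2 1) * ent Qt 1 1) - (ent Pt 1 1 * (ent Q 1 2 + ent Q 2 1) + (ent Pt 1 2 + ent Pt 2 1) * ent Q 1 1));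
  ((ent P 1 1 * ent Qt 1 1) - (ent Pt 1 1 * ent Q 1 1))].
Lemma qf_exp (R : comRingType) (M : 'M[R]_3) (x y : R) : qf M x y = ent M 1 1 * x ^+ 2 * y ^+ 0 + (ent M 1 2 + ent M 2 1) * x ^+ 1 * y ^+ 1 + ent M 2 2 * x ^+ 0 * y ^+ 2 + (ent M 1 3 + ent M 3 1) * x ^+ 1 * y ^+ 0 + (ent M 2 3 + ent M 3 2) * x ^+ 0 * y ^+ 1 + ent M 3 3 * x ^+ 0 * y ^+ 0.
Proof.
have I0 : (inord 0 : 'I_3) = ord0 by apply: val_inj; rewrite /= inordK.
have I1 : (inord 1 : 'I_3) = lift ord0 ord0 by apply: val_inj; rewrite /= inordK.
have I2 : (inord 2 : 'I_3) = lift ord0 (lift ord0 ord0) by apply: val_inj; rewrite /= inordK.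
rewrite /qf /xbar /ent /= I0 I1 I2 !mxE !big_ord_recl !big_ord0 /= !mxE !big_ord_recl !big_ord0 /= !mxE /=.
ring.
Qed.

Lemma Vmat_cF (R : comRingType) (P Q Pt Qt : 'M[R]_3) N (xs ys : 'I_N -> R) i :
  (Vmat xs ys *m \col_(j < 15) nth 0 (cFl P Q Pt Qt) j) i 0 =
  qf P (xs i) (ys i) * qf Qt (xs i) (ys i) - qf Pt (xs i) (ys i) * qf Q (xs i) (ys i).
Proof.
rewrite !qf_exp mxE.
rewrite !big_ord_recl big_ord0 !mxE /=.
ring.
Qed.
Definition resb (R : ringType) (a b c d e f : R) :=
  4 * (a * e - b * d) * (c * e - b * f) + (a * f - c * d) ^+ 2.

Lemma cramer (R : fieldType) (a b c d e f B C E F : R) :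
  (4 : R) != 0 -> resb a b c d e f != 0 ->
  -(2) * d * B + 2 * a * E = 0 ->
  -(4) * e * B - d * C + 4 * b * E + a * F = 0 ->
  -(2) * f * B - 2 * e * C + 2 * c * E + 2 * b * F = 0 ->
  - f * C + c * F = 0 ->
  B = 0 /\ C = 0 /\ E = 0 /\ F = 0.
Proof.
move=> h4 hr h1 h2 h3 h5.
have key : forall X k1 k2 k3 k4 : R,
  4 * resb a b c d e f * X = k1 * (-(2) * d * B + 2 * a * E)
   + k2 * (-(4) * e * B - d * C + 4 * b * E + a * F)
   + k3 * (-(2) * f * B - 2 * e * C + 2 * c * E + 2 * b * F)
   + k4 * (- f * C + c * F) -> X = 0.
  move=> X k1 k2 k3 k4; rewrite h1 h2 h3 h5 !mulr0 !addr0 => /eqP.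
  by rewrite !mulf_eq0 (negbTE h4) (negbTE hr) /= => /eqP.
have hB : B = 0 by apply: (key B
  (-(2) * c*c*d + 8 * b*c*e - 8 * b*b*f + 2 * a*c*f)
  (-(4) * a*c*e + 4 * a*b*f) (2 * a*c*d - 2 * a*a*f) (-(4) * a*b*d + 4 * a*a*e)); rewrite /resb; ring.
have hC : C = 0 by apply: (key C
  (8 * c*c*e - 8 * b*c*f) (-(4) * c*c*d + 4 * a*c*f) (8 * b*c*d - 8 * a*c*e)
  (-(16) * b*b*d + 4 * a*c*d + 16 * a*b*e - 4 * a*a*f)); rewrite /resb; ring.
have hE : E = 0 by apply: (key E
  (8 * c*e*e - 2 * c*d*f - 8 * b*e*f + 2 * a*f*f) (-(4) * c*d*e + 4 * b*d*f)
  (2 * c*d*d - 2 * a*d*f) (-(4) * b*d*d + 4 * a*d*e)); rewrite /resb; ring.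
have hF : F = 0 by apply: (key F (8 * c*e*f - 8 * b*f*f) (-(4) * c*d*f + 4 * a*f*f)
  (8 * b*d*f - 8 * a*e*f) (4 * c*d*d - 16 * b*d*e + 16 * a*e*e - 4 * a*d*f)); rewrite /resb; ring.
by [].
Qed.

Lemma binary (R : fieldType) (a b c d e f a' b' c' d' e' f' : R) :
  (4 : R) != 0 -> d != 0 -> resb a b c d e f != 0 ->
  a * d' - a' * d = 0 ->
  a * (2 * e') + 2 * b * d' - (a' * (2 * e) + 2 * b' * d) = 0 ->
  a * f' + 2 * b * (2 * e') + c * d' - (a' * f + 2 * b' * (2 * e) + c' * d) = 0 ->
  2 * b * f' + c * (2 * e') - (2 * b' * f + c' * (2 * e)) = 0 ->
  c * f' - c' * f = 0 ->
  a' = d' / d * a /\ b' = d' / d * b /\ c' = d' / d * c /\ d' = d' / d * d /\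
      e' = d' / d * e /\ f' = d' / d * f.
Proof.
move=> h4 hd hr E1 E2 E3 E4 E5.
have [s hs] : exists s, s = d' / d by eexists.
rewrite -hs.
have hd' : d' = s * d by rewrite hs divfK.
subst d'.
have ha' : a' = s * a.
  have : (s * a - a') * d = 0 by rewrite -E1; ring.
  move/eqP; rewrite mulf_eq0 (negbTE hd) orbF subr_eq0 => /eqP ->; done.
subst a'.
have [hB [hC [hE hF]]] := cramer (B := b' - s * b) (C := c' - s * c)
   (E := e' - s * e) (F := f' - s * f) h4 hr
   ltac:(rewrite -E2; ring) ltac:(rewrite -E3; ring) ltac:(rewrite -E4; ring) ltac:(rewrite -E5; ring).
by do !split; rewrite // ?(subr0_eq hB) ?(subr0_eq hC) ?(subr0_eq hE) ?(subr0_eq hF).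
Qed.

Lemma symE (R : ringType) (M : 'M[R]_3) : M^T = M -> forall a b, ent M b a = ent M a b.
Proof. by move=> h a b; rewrite /ent -{1}h mxE. Qed.

Lemma mat_ent (R : ringType) (M M' : 'M[R]_3) s : M^T = M -> M'^T = M' ->
  ent M' 1 1 = s * ent M 1 1 -> ent M' 1 2 = s * ent M 1 2 ->
  ent M' 1 3 = s * ent M 1 3 -> ent M' 2 2 = s * ent M 2 2 ->
  ent M' 2 3 = s * ent M 2 3 -> ent M' 3 3 = s * ent M 3 3 -> M' = s *: M.
Proof.
move=> sM sM' h11 h12 h13 h22 h23 h33.
have hent : forall (N : 'M[R]_3) (i j : 'I_3), N i j = ent N i.+1 j.+1.
  by move=> N i j; rewrite /ent /= !inord_val.
apply/matrixP => i j; rewrite mxE.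
case: i => [[|[|[|//]]] hi]; case: j => [[|[|[|//]]] hj]; rewrite !hent /=;
  rewrite ?h11 ?h12 ?h13 ?h22 ?h23 ?h33 //.
- by rewrite (symE sM') h12 (symE sM).
- by rewrite (symE sM') h13 (symE sM).
- by rewrite (symE sM') h23 (symE sM).
Qed.

Lemma qf0 (R : ringType) (x y : R) : qf 0 x y = 0.
Proof. by rewrite /qf mulmx0 mul0mx mxE. Qed.
Theorem lemma2 (R : realType) (P Q Pt Qt : 'M[R]_3) (N : nat)
    (xs ys : 'I_N -> R) :
  P^T = P -> Q^T = Q -> Pt^T = Pt -> Qt^T = Qt ->
  \rank (Vmat xs ys) = 15%N ->
  (forall i : 'I_N,
     qf Q (xs i) (ys i) != 0 /\ qf Qt (xs i) (ys i) != 0 /\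
     qf P (xs i) (ys i) / qf Q (xs i) (ys i)
       = qf Pt (xs i) (ys i) / qf Qt (xs i) (ys i)) ->
  ((* Case 1 *)
   (ent Q 1 1 != 0 /\ ent Q 2 2 != 0 /\ ent Q 3 3 != 0 /\
    disc_cond P Q 1 2 != 0 /\ disc_cond P Q 1 3 != 0 /\
    disc_cond P Q 2 3 != 0)
   \/
   (* Case 2 *)
   ((forall j : nat, (1 <= j <= 3)%N ->
       ent P j 2 = 0 /\ ent P 2 j = 0 /\ ent Q j 2 = 0 /\ ent Q 2 j = 0 /\
       ent Pt j 2 = 0 /\ ent Pt 2 j = 0 /\ ent Qt j 2 = 0 /\ ent Qt 2 j = 0) /\
    ent Q 1 1 != 0 /\ ent Q 3 3 != 0 /\ disc_cond P Q 1 3 != 0)) ->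
  exists t : R, t != 0 /\ P = t *: Pt /\ Q = t *: Qt.
Proof.
move=> sP sQ sPt sQt hrk hpts hcase.
have h4 : (4 : R) != 0 by rewrite pnatr_eq0.
have hN : (15 <= N)%N by rewrite -hrk rank_leq_row.
pose i0 : 'I_N := Ordinal (leq_trans (isT : (0 < 15)%N) hN).
set cF := \col_(j < 15) nth 0 (cFl P Q Pt Qt) j.
have hV : Vmat xs ys *m cF = 0.
  apply/matrixP => i j; rewrite (ord1 j) Vmat_cF mxE.
  have [hq [hqt he]] := hpts i.
  move/eqP: he; rewrite eqr_div // => /eqP ->; by rewrite subrr.
have hc : cF = 0.
  have /row_fullP [B hB] : row_full (Vmat xs ys) by rewrite /row_full hrk.
  by rewrite -[cF]mul1mx -hB -mulmxA hV mulmx0.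
have coef : forall k, (k < 15)%N -> nth 0 (cFl P Q Pt Qt) k = 0.
  move=> k hk; have := congr1 (fun M : 'cV[R]_15 => M (inord k) ord0) hc.
  by rewrite !mxE inordK.
have c0 := coef 0%N isT; have c1 := coef 1%N isT; have c2 := coef 2%N isT.
have c3 := coef 3%N isT; have c5 := coef 5%N isT; have c6 := coef 6%N isT.
have c9 := coef 9%N isT; have c10 := coef 10%N isT; have c11 := coef 11%N isT.
have c12 := coef 12%N isT; have c13 := coef 13%N isT; have c14 := coef 14%N isT.
move: c0 c1 c2 c3 c5 c6 c9 c10 c11 c12 c13 c14 => /= c0 c1 c2 c3 c5 c6 c9 c10 c11 c12 c13 c14.
rewrite ?(symE sP 1 2) ?(symE sP 1 3) ?(symE sP 2 3) ?(symE sQ 1 2) ?(symE sQ 1 3) ?(symE sQ 2 3)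
  ?(symE sPt 1 2) ?(symE sPt 1 3) ?(symE sPt 2 3) ?(symE sQt 1 2) ?(symE sQt 1 3) ?(symE sQt 2 3)
  in c0 c1 c2 c3 c5 c6 c9 c10 c11 c12 c13 c14.
set s := ent Qt 1 1 / ent Q 1 1.
have B13 : ent Q 1 1 != 0 -> disc_cond P Q 1 3 != 0 ->
   ent Pt 1 1 = s * ent P 1 1 /\ ent Pt 1 3 = s * ent P 1 3 /\ ent Pt 3 3 = s * ent P 3 3 /\
   ent Qt 1 1 = s * ent Q 1 1 /\ ent Qt 1 3 = s * ent Q 1 3 /\ ent Qt 3 3 = s * ent Q 3 3.
  move=> hq hr.
  apply: (binary (a := ent P 1 1) (b := ent P 1 3) (c := ent P 3 3)
    (d := ent Q 1 1) (e := ent Q 1 3) (f := ent Q 3 3) h4 hq hr).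
  - by rewrite -c14; ring.
  - by rewrite -c9; ring.
  - by rewrite -c5; ring.
  - by rewrite -c2; ring.
  - by rewrite -c0; ring.
have [sv [sv0 [hPtS hQtS]]] : exists s, s != 0 /\ Pt = s *: P /\ Qt = s *: Q.
  suff [hPt hQt] : Pt = s *: P /\ Qt = s *: Q.
    exists s; split=> //; apply/eqP => s0.
    have [_ [hqt _]] := hpts i0; move: hqt.
    by rewrite hQt s0 scale0r qf0 eqxx.
  case: hcase => [[hq1 [hq2 [hq3 [hr12 [hr13 hr23]]]]] | [hz [hq1 [hq3 hr13]]]].
  - have [a1 [a2 [a3 [a4 [a5 a6]]]]] := B13 hq1 hr13.
    have [b1 [b2 [b3 [b4 [b5 b6]]]]] :
      ent Pt 1 1 = s * ent P 1 1 /\ ent Pt 1 2 = s * ent P 1 2 /\ ent Pt 2 2 = s * ent P 2 2 /\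
      ent Qt 1 1 = s * ent Q 1 1 /\ ent Qt 1 2 = s * ent Q 1 2 /\ ent Qt 2 2 = s * ent Q 2 2.
      apply: (binary (a := ent P 1 1) (b := ent P 1 2) (c := ent P 2 2)
        (d := ent Q 1 1) (e := ent Q 1 2) (f := ent Q 2 2) h4 hq1 hr12).
      - by rewrite -c14; ring.
      - by rewrite -c13; ring.
      - by rewrite -c12; ring.
      - by rewrite -c11; ring.
      - by rewrite -c10; ring.
    have [d1 [d2 [d3 [d4 [d5 d6]]]]] :=
      binary (a := ent P 2 2) (b := ent P 2 3) (c := ent P 3 3)
        (d := ent Q 2 2) (e := ent Q 2 3) (f := ent Q 3 3)
        (a' := ent Pt 2 2) (b' := ent Pt 2 3) (c' := ent Pt 3 3)
        (d' := ent Qt 2 2) (e' := ent Qt 2 3) (f' := ent Qt 3 3) h4 hq2 hr23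
        ltac:(rewrite -c10; ring) ltac:(rewrite -c6; ring) ltac:(rewrite -c3; ring)
        ltac:(rewrite -c1; ring) ltac:(rewrite -c0; ring).
    have es : ent Qt 2 2 / ent Q 2 2 = s by rewrite b6 mulfK.
    rewrite es in d2 d5.
    split; apply: mat_ent => //.
  - have [a1 [a2 [a3 [a4 [a5 a6]]]]] := B13 hq1 hr13.
    have [z1 [z1' [z1'' [z1''' [z1a [z1b [z1c z1d]]]]]]] := hz 1%N isT.
    have [z2 [z2' [z2'' [z2''' [z2a [z2b [z2c z2d]]]]]]] := hz 2%N isT.
    have [z3 [z3' [z3'' [z3''' [z3a [z3b [z3c z3d]]]]]]] := hz 3%N isT.
    split; apply: mat_ent => //;
      rewrite ?(symE sP 3 2) ?(symE sQ 3 2) ?(symE sPt 3 2) ?(symE sQt 3 2);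
      by rewrite ?z1 ?z1' ?z1'' ?z1''' ?z1a ?z1b ?z1c ?z1d ?z2 ?z2' ?z2'' ?z2''' ?z2a ?z2b ?z2c ?z2d
        ?z3 ?z3' ?z3'' ?z3''' ?z3a ?z3b ?z3c ?z3d mulr0.
exists sv^-1; split; first by rewrite invr_neq0.
by rewrite hPtS hQtS !scalerA mulVf // !scale1r.
Qed.
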